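(* For $\alpha=(\alpha_1,\dots,\alpha_r)$ with $1\ge\alpha_1\ge\dots\ge\alpha_r\ge0$ and $\sum_{i=1}^r\alpha_i=1$ (where $r$ may vary), let $H(\alpha)=-\sum_{i=1}^r\alpha_i\log\alpha_i$ and $H'(\alpha)=-\sum_{i=2}^r\alpha_i\log\alpha_i$. Then $$\lim_{\alpha_1\uparrow 1}\frac{H'(\alpha)}{H(\alpha)}=1\qquad\text{and}\qquad\lim_{\alpha_1\downarrow 0}\frac{H'(\alpha)}{H(\alpha)}=1,$$ uniformly over the remaining coordinates.
   Context: $\log$ is the natural logarithm, with the convention $0\log 0=0$. *)

(* Defs.v *)
From HB Require Import structures.
From mathcomp Require Import all_boot all_order all_algebra.
From mathcomp Require Import all_classical all_reals all_analysis.
Set Implicit Arguments. Unset Strict Implicit. Unset Printing Implicit Defensive.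
Import Order.TTheory GRing.Theory Num.Theory.
Local Open Scope ring_scope.

Definition xlnx {R : realType} (x : R) : R := if x == 0 then 0 else x * ln x.

(* A probability vector alpha = (a 0, ..., a (r-1)) (so alpha_1 = a 0),
   nonincreasing, nonnegative, summing to 1, with r >= 1. *)
Definition ordered_prob_vec {R : realType} (r : nat) (a : nat -> R) : Prop :=
  [/\ (0 < r)%N,
      (forall i, (i < r)%N -> 0 <= a i),
      (forall i, (i.+1 < r)%N -> a i.+1 <= a i)
    & \sum_(i < r) a i = 1].

Definition entropyH {R : realType} (r : nat) (a : nat -> R) : R :=
  - \sum_(0 <= i < r) xlnx (a i).

Definition entropyH' {R : realType} (r : nat) (a : nat -> R) : R :=
  - \sum_(1 <= i < r) xlnx (a i).

(* Main.v *)
Require Import Defs.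
From HB Require Import structures.
From mathcomp Require Import all_boot all_order all_algebra.
From mathcomp Require Import all_classical all_reals all_analysis.
From mathcomp Require Import lra.
Import Order.TTheory GRing.Theory Num.Theory.
Local Open Scope ring_scope.
Set Implicit Arguments.

Lemma xlnx_ge (R : realType) (x c : R) : 0 <= x -> x <= c -> 0 < c ->
  x * (- ln c) <= - xlnx x.
Proof.
move=> x0 xc c0; rewrite /xlnx; case: eqP => [->|/eqP xn0]; first by rewrite mul0r oppr0.
have xp : 0 < x by rewrite lt0r xn0.
rewrite mulrN lerN2; apply: ler_wpM2l => //.
by rewrite ler_ln // posrE // (lt_le_trans xp xc).
Qed.

Lemma xlnx_le (R : realType) (x : R) : 0 < x -> - xlnx x <= 1 - x.
Proof.
move=> xp; rewrite /xlnx (negbTE (lt0r_neq0 xp)).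
have h : ln (1 + (x^-1 - 1)) <= x^-1 - 1 by apply: le_ln1Dx; have := invr_gt0 x; rewrite xp; lra.
have e : 1 + (x^-1 - 1) = x^-1 by rewrite addrC subrK.
rewrite e lnV ?posrE // in h.
rewrite -mulrN. have := ler_wpM2l (ltW xp) h.
by rewrite mulrBr divff ?mulr1 // lt0r_neq0.
Qed.

Lemma splitH (R : realType) (r : nat) (a : nat -> R) : (0 < r)%N ->
  entropyH r a = - xlnx (a 0%N) + entropyH' r a.
Proof. by move=> r0; rewrite /entropyH /entropyH' big_ltn // opprD. Qed.


Lemma ratio (R : realType) (h H : R) : 0 <= h -> 0 < H ->
  `| (H - h) / H - 1 | = h / H.
Proof.
move=> h0 H0; have -> : (H - h) / H - 1 = - (h / H).
  by rewrite mulrBl divff ?lt0r_neq0 //; lra.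
by rewrite normrN ger0_norm // divr_ge0 // ltW.
Qed.

Lemma psum (R : realType) (r : nat) (a : nat -> R) :
  (forall i, (i < r)%N -> 0 <= a i) -> forall m n, (n <= r)%N -> 0 <= \sum_(m <= j < n) a j.
Proof.
move=> nn m n nr; rewrite big_nat_cond; apply: sumr_ge0 => j /andP[/andP[_ jn] _].
by apply: nn; exact: leq_trans jn nr.
Qed.

Theorem lemma1 (R : realType) :
  (forall eps : R, 0 < eps -> exists delta : R, 0 < delta /\
     forall (r : nat) (a : nat -> R), ordered_prob_vec r a ->
       1 - delta < a 0%N < 1 ->
       `| entropyH' r a / entropyH r a - 1 | < eps) /\
  (forall eps : R, 0 < eps -> exists delta : R, 0 < delta /\
     forall (r : nat) (a : nat -> R), ordered_prob_vec r a ->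
       0 < a 0%N < delta ->
       `| entropyH' r a / entropyH r a - 1 | < eps).
Proof.
split=> eps e0.
- exists (expR (- eps^-1)); split; first exact: expR_gt0.
  move=> r a [r0 nn mono s1] /andP[ha1 ha2].
  have a0p : 0 < a 0%N.
    have : expR (- eps^-1) < 1 by rewrite expR_lt1 oppr_lt0 invr_gt0.
    lra.
  set c := 1 - a 0%N.
  have c0 : 0 < c by rewrite /c; lra.
  have sum1 : \sum_(1 <= i < r) a i = c.
    by move: s1; rewrite -(big_mkord xpredT) big_ltn // /c => <-; rewrite addrC addKr.
  have ai : forall i, (1 <= i < r)%N -> a i <= c.
    move=> i /andP[i1 ir]; rewrite -sum1 (big_cat_nat _ (n:=i)) //=; last exact: ltnW.
    rewrite [X in _ <= _ + X]big_ltn //.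
    have := @psum _ _ _ nn 1 i (ltnW ir); have := @psum _ _ _ nn i.+1 r (leqnn r); lra.
  set L := - ln c.
  have Lgt : eps^-1 < L.
    rewrite /L ltrNr; rewrite -[X in _ < X]expRK ltr_ln ?posrE ?expR_gt0 //.
    rewrite /c; lra.
  have Hp : c * L <= entropyH' r a.
    rewrite /entropyH' -sumrN -sum1 mulr_suml; apply: ler_sum_nat => k hk.
    apply: xlnx_ge => //; [apply: nn; by case/andP: hk | exact: ai].
  set h := - xlnx (a 0%N).
  have h0 : 0 <= h.
    by have := @xlnx_ge _ _ _ (ltW a0p) (ltW ha2) ltr01; rewrite ln1 oppr0 mulr0.
  have hc : h <= c by exact: xlnx_le.
  have epsL : 1 < eps * L.
    by have := ltr_pM2l e0 (eps^-1) L; rewrite divff ?lt0r_neq0 // => ->.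
  have cL : 0 < c * L by apply: mulr_gt0 => //; apply: lt_trans Lgt; rewrite invr_gt0.
  have Hpos : 0 < h + entropyH' r a by lra.
  rewrite (@splitH _ _ _ r0) -/h.
  set H := h + entropyH' r a.
  have -> : entropyH' r a = H - h by rewrite /H; lra.
  rewrite ratio //.
  rewrite ltr_pdivrMr //.
  have : c < eps * (c * L) by rewrite mulrCA -[X in X < _]mulr1 ltr_pM2l.
  have : eps * (c * L) <= eps * (h + entropyH' r a) by rewrite ler_pM2l //; lra.
  rewrite /H; lra.
- exists (Num.min eps (2^-1)); split; first by rewrite lt_min e0 invr_gt0 ltr0n.
  move=> r a [r0 nn mono s1] /andP[a0p]; rewrite lt_min => /andP[ae a2].
  have a1 : a 0%N < 1.
    have : (2^-1 : R) < 1 by rewrite invf_lt1 ?ltr0n // ltr1n.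
    lra.
  have ai : forall i, (i < r)%N -> a i <= a 0%N.
    elim=> [//|i IH] ir; apply: le_trans (mono _ ir) (IH (ltnW ir)).
  set L := - ln (a 0%N).
  have L0 : 0 < L by rewrite /L oppr_gt0 ln_lt0 // a0p a1.
  have HL : L <= entropyH r a.
    rewrite /entropyH -sumrN -[X in X <= _]mul1r -s1 -(big_mkord xpredT) mulr_suml.
    by apply: ler_sum_nat => i /andP[_ hi]; apply: xlnx_ge; [exact: nn | exact: ai | exact: a0p].
  set h := - xlnx (a 0%N).
  have he : h = a 0%N * L by rewrite /h /xlnx (negbTE (lt0r_neq0 a0p)) mulrN.
  have h0 : 0 <= h by rewrite he mulr_ge0 // ltW.
  have Hpos : 0 < entropyH r a by lra.
  have -> : entropyH' r a = entropyH r a - h by rewrite (@splitH _ _ _ r0) -/h; lra.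
  rewrite ratio // ltr_pdivrMr // he.
  have : a 0%N * L < eps * L by rewrite ltr_pM2r.
  have : eps * L <= eps * entropyH r a by rewrite ler_pM2l.
  lra.
Qed.
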